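(* Let $x_1,\dots,x_n$ be i.i.d. uniform random variables on $[0,1]$. For any $\gamma,\gamma',\delta\in(0,1)$, with probability at least $1-\delta$, $$\mathsf{Q}^+_\gamma\Big(\frac1n\sum_{i=1}^n\delta_{x_i}\Big)-\gamma\le\min_{\varepsilon\in(0,1)}\Big\{(1-\varepsilon)^{-1}\Big[\varepsilon|\gamma-\gamma'|+\sqrt{\frac{2\gamma'(1-\gamma')\log(1/\delta)}{n}}+\Big(\frac23+\frac1{2\varepsilon}\Big)\frac{\log(1/\delta)}{n}\Big]\Big\}.$$ The same upper bound also holds for $\gamma-\mathsf{Q}^-_\gamma\big(\frac1n\sum_{i=1}^n\delta_{x_i}\big)$ with probability at least $1-\delta$.
   Context: For a probability distribution with CDF $F$ and $\gamma\in(0,1)$: $\mathsf{Q}^-_\gamma(F)=\inf\{x:F(x)\ge\gamma\}$ and $\mathsf{Q}^+_\gamma(F)=\inf\{x:F(x)>\gamma\}$. $\delta_x$ is the Dirac measure at $x$. *)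

(* Defs.v *)
From HB Require Import structures.
From mathcomp Require Import all_boot all_order all_algebra.
From mathcomp Require Import all_classical all_reals all_analysis.
Set Implicit Arguments. Unset Strict Implicit. Unset Printing Implicit Defensive.
Import Order.TTheory GRing.Theory Num.Theory.
Local Open Scope classical_set_scope.
Local Open Scope ring_scope.

Definition Qminus (R : realType) (g : R) (F : R -> R) : R :=
  inf [set x | g <= F x].
Definition Qplus (R : realType) (g : R) (F : R -> R) : R :=
  inf [set x | g < F x].

(* CDF of the empirical measure (1/n) sum_i delta_{xs i}. *)
Definition emp_cdf (R : realType) (n : nat) (xs : 'I_n -> R) (x : R) : R :=
  n%:R^-1 * \sum_(i < n) (if xs i <= x then 1 else 0).

(* Mutual independence of a finite family of real random variables:
   product rule for every family of Borel sets (taking B i = setT recovers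
   every subfamily). *)
Definition mutually_independent d (T : measurableType d) (R : realType)
    (P : probability T R) (n : nat) (X : 'I_n -> T -> R) : Prop :=
  forall B : 'I_n -> set R, (forall i, measurable (B i)) ->
    P (\bigcap_(i in setT) (X i @^-1` B i)) =
    (\prod_(i < n) P (X i @^-1` B i))%E.

(* Main.v *)
Require Import Defs.
From HB Require Import structures.
From mathcomp Require Import all_boot all_order all_algebra.
From mathcomp Require Import all_classical all_reals all_analysis.
From mathcomp Require Import ring lra.
Import Order.TTheory GRing.Theory Num.Theory.
Local Open Scope classical_set_scope.
Local Open Scope ring_scope.

Section SH.
Variable R : realType.
Implicit Types x : R.

Lemma fact_ge N : (2 * 3 ^ N <= N.+2`!)%N.
Proof.
elim: N => [//|N IH].
rewrite factS expnS mulnCA.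
apply: leq_mul => //.
Qed.

Lemma series_le x N : 0 <= x -> x < 3 ->
  series (exp_coeff x) N.+2 <= 1 + x + x ^+ 2 / 2 * \sum_(k < N) (x / 3) ^+ k.
Proof.
move=> x0 x3; elim: N => [|N IH].
  rewrite /series /= big_mkord !big_ord_recr big_ord0 /= big_ord0.
  by rewrite /exp_coeff /= add0r expr0 expr1 !divr1 mulr0 addr0 lexx.
rewrite /series /= big_nat_recr //= -/(series _ _) big_ord_recr /= mulrDr addrA.
apply: lerD; first exact: IH.
rewrite /exp_coeff /=.
have h1 : (2 * 3 ^ N)%:R <= (N.+2`!)%:R :> R by rewrite ler_nat fact_ge.
have hp : 0 < (2 * 3 ^ N)%:R :> R by rewrite ltr0n muln_gt0 expn_gt0.
have -> : x ^+ 2 / 2 * (x / 3) ^+ N = x ^+ N.+2 * ((2 * 3 ^ N)%:R)^-1.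
  rewrite natrM natrX exprMn exprVn !exprS; field.
  by rewrite expf_neq0.
apply: ler_wpM2l; first exact: exprn_ge0.
by rewrite lef_pV2 ?posrE // (lt_le_trans hp h1).
Qed.

Lemma geom_le (r : R) N : 0 <= r < 1 -> \sum_(k < N) r ^+ k <= (1 - r)^-1.
Proof.
move=> /andP[r0 r1]; have h : 0 < 1 - r by rewrite subr_gt0.
elim: N => [|N IH]; first by rewrite big_ord0 invr_ge0 ltW.
rewrite big_ord_recl expr0.
under eq_bigr do rewrite exprS.
rewrite -mulr_sumr.
have H : r * \sum_(i < N) r ^+ i <= r * (1 - r)^-1 by apply: ler_wpM2l.
have E : (1 - r)^-1 = 1 + r * (1 - r)^-1 by field; rewrite gt_eqF.
by rewrite [X in _ <= X]E lerD2l.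
Qed.

Lemma expR_le_pos x : 0 <= x -> x < 3 ->
  expR x <= 1 + x + x ^+ 2 / (2 * (1 - x / 3)).
Proof.
move=> x0 x3; rewrite /expR.
apply: limr_le; first exact: is_cvg_series_exp_coeff.
near=> M.
have [N ->] : exists N, M = N.+2.
  by exists M.-2; rewrite -subn2 -addn2 subnK //; near: M; exists 2%N.
apply: (le_trans (series_le _ N x0 x3)).
have h : 0 < 1 - x / 3 by lra.
have hr : 0 <= x / 3 < 1 by apply/andP; split; lra.
have := geom_le _ N hr.
have -> : x ^+ 2 / (2 * (1 - x / 3)) = x ^+ 2 / 2 * (1 - x / 3)^-1.
  by rewrite invfM mulrA.
move=> H; rewrite lerD2l; apply: ler_wpM2l => //.
by rewrite divr_ge0 // exprn_ge0.
Unshelve. all: by end_near.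
Qed.

Lemma series_le_expR x M : 0 <= x -> series (exp_coeff x) M <= expR x.
Proof.
move=> x0; rewrite /expR.
apply: limr_ge; first exact: is_cvg_series_exp_coeff.
near=> K.
have MK : (M <= K)%N by near: K; exists M.
rewrite /series /= (big_cat_nat (leq0n M) MK) /= lerDl.
apply: sumr_ge0 => i _; rewrite /exp_coeff /= divr_ge0 // exprn_ge0 //.
Unshelve. all: by end_near.
Qed.

Lemma expR_le_neg' (y : R) : 0 <= y -> expR (- y) <= 1 - y + y ^+ 2 / 2.
Proof.
move=> y0.
have := series_le_expR y 4 y0.
rewrite /series /= big_mkord !big_ord_recr big_ord0 /= /exp_coeff /=.
rewrite add0r expr0 expr1 !divr1.
rewrite expRN => H.
have ey : 0 < expR y by apply: expR_gt0.
have B : 0 < 1 - y + y ^+ 2 / 2 by nra.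
rewrite -div1r ler_pdivrMr //.
have f3 : (3`!)%:R = 6 :> R by [].
have f2 : (2`!)%:R = 2 :> R by [].
rewrite f2 f3 in H.
have h2 : (1 + y + y ^+ 2 / 2 + y ^+ 3 / 6) * (1 - y + y ^+ 2 / 2) <= expR y * (1 - y + y ^+ 2 / 2).
  by apply: ler_wpM2r => //; lra.
have h1 : 1 <= (1 + y + y ^+ 2 / 2 + y ^+ 3 / 6) * (1 - y + y ^+ 2 / 2).
  have -> : (1 + y + y ^+ 2 / 2 + y ^+ 3 / 6) * (1 - y + y ^+ 2 / 2) =
     1 + y ^+ 3 / 6 + y ^+ 4 / 12 + y ^+ 5 / 12 by field.
  have := exprn_ge0 3 y0; have := exprn_ge0 4 y0; have := exprn_ge0 5 y0. lra.
rewrite mulrC; exact: le_trans h1 h2.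
Qed.

Lemma expR_le_neg x : x <= 0 -> expR x <= 1 + x + x ^+ 2 / 2.
Proof.
move=> x0; have := expR_le_neg' (- x) (ltac:(by rewrite oppr_ge0)).
by rewrite opprK sqrrN.
Qed.

Lemma mgf_bound (p l : R) : 0 < p < 1 -> 0 <= l < 3 ->
  (1 - p) * expR (- (l * p)) + p * expR (l * (1 - p)) <=
  expR (p * (1 - p) * (l ^+ 2 / (2 * (1 - l / 3)))).
Proof.
move=> /andP[p0 p1] /andP[l0 l3].
set q := 1 - p; set D := l ^+ 2 / (2 * (1 - l / 3)).
have q0 : 0 < q by rewrite /q subr_gt0.
have hl : 0 < 1 - l / 3 by lra.
have D0 : 0 <= D by rewrite /D divr_ge0 ?exprn_ge0 //; lra.
have DE : D * (1 - l / 3) = l ^+ 2 / 2.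
  by rewrite /D invfM mulrA mulfVK // gt_eqF.
clearbody D.
have e1 : expR (- (l * p)) <= 1 - l * p + p ^+ 2 * D.
  have lp0 : 0 <= l * p by rewrite mulr_ge0 // ltW.
  apply: (le_trans (expR_le_neg' _ lp0)).
  rewrite lerD2l.
  have h : l ^+ 2 / 2 <= D.
    have h0 : 0 <= D * l by apply: mulr_ge0.
    have h1 : D * (1 - l / 3) <= D by lra.
    by rewrite -DE.
  have -> : (l * p) ^+ 2 / 2 = p ^+ 2 * (l ^+ 2 / 2) by ring.
  by apply: ler_wpM2l => //; rewrite ?exprn_ge0 ?ltW.
have e2 : expR (l * q) <= 1 + l * q + q ^+ 2 * D.
  have lq0 : 0 <= l * q by rewrite mulr_ge0 // ltW.
  have q1 : q <= 1 by rewrite /q; lra.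
  have lq3 : l * q < 3 by nra.
  apply: (le_trans (expR_le_pos _ lq0 lq3)); rewrite lerD2l.
  have hlq : 0 < 1 - l * q / 3 by lra.
  rewrite ler_pdivrMr; last by lra.
  have : q ^+ 2 * D * (2 * (1 - l / 3)) <= q ^+ 2 * D * (2 * (1 - l * q / 3)).
    apply: ler_wpM2l; first by rewrite mulr_ge0 // exprn_ge0 // ltW.
    nra.
  have -> : q ^+ 2 * D * (2 * (1 - l / 3)) = (l * q) ^+ 2.
    have E : q ^+ 2 * D * (2 * (1 - l / 3)) = 2 * q ^+ 2 * (D * (1 - l / 3)) by ring.
    by rewrite E DE; field.
  done.
apply: (le_trans _ (expR_ge1Dx _)).
have -> : 1 + p * q * D = q * (1 - l * p + p ^+ 2 * D) + p * (1 + l * q + q ^+ 2 * D).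
  by rewrite /q; ring.
apply: lerD; apply: ler_wpM2l => //; lra.
Qed.

Lemma sum_prod_if n (a b : R) :
  \sum_(S : {set 'I_n}) \prod_(i < n) (if i \in S then a else b) = (a + b) ^+ n.
Proof.
have := @bigA_distr R 0 1 *%R +%R 'I_n (fun=> a) (fun=> b).
rewrite /= prodr_const card_ord => ->.
by apply: eq_bigl => S.
Qed.

Lemma sum_wt0 n (q : R) (phi : R -> bool) : (forall k : nat, phi k%:R -> (0 < k)%N) ->
  \sum_(S : {set 'I_n} | phi #|S|%:R) \prod_(i < n) (if i \in S then 0 else q) = 0 :> R.
Proof.
move=> hphi; apply: big1 => S /hphi; rewrite card_gt0 => /set0Pn [i iS].
by rewrite (bigD1 i) //= iS mul0r.
Qed.

Lemma tail_alg (s t : R) : 0 < s -> 0 < t ->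
  - (t / (s + t / 3) * t) + s * ((t / (s + t / 3)) ^+ 2 / (2 * (1 - t / (s + t / 3) / 3)))
  = - (t ^+ 2 / (2 * s + 2 * t / 3)).
Proof.
move=> s0 t0.
have E1 : 1 - t / (s + t / 3) / 3 = s / (s + t / 3).
  by field; rewrite gt_eqF //; lra.
rewrite E1; field; rewrite !gt_eqF //; lra.
Qed.
Lemma tail_upper n (p t : R) : 0 < p < 1 -> 0 < t ->
  \sum_(S : {set 'I_n} | n%:R * (p + t) <= #|S|%:R)
     \prod_(i < n) (if i \in S then p else 1 - p)
  <= expR (- (n%:R * t ^+ 2 / (2 * p * (1 - p) + 2 * t / 3))).
Proof.
move=> /andP[p0 p1] t0.
set q := 1 - p; set s := p * q.
have q0 : 0 < q by rewrite /q subr_gt0.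
have s0 : 0 < s by rewrite /s mulr_gt0.
set l := t / (s + t / 3).
have l0 : 0 <= l by rewrite /l divr_ge0 //; lra.
have l3 : l < 3.
  rewrite /l ltr_pdivrMr; last by lra.
  lra.
set c := n%:R * (p + t).
have wt0 S : 0 <= \prod_(i < n) (if i \in S then p else q).
  by apply: prodr_ge0 => i _; case: ifP => _; apply: ltW.
apply: (@le_trans _ _ (\sum_(S : {set 'I_n})
   \prod_(i < n) (if i \in S then p else q) * expR (l * (#|S|%:R - c)))).
  rewrite [X in X <= _]big_mkcond /=; apply: ler_sum => S _.
  case: ifP => h.
    apply: ler_peMr => //; apply: (le_trans _ (expR_ge1Dx _)).
    by rewrite lerDl; apply: mulr_ge0 => //; rewrite subr_ge0.
  by apply: mulr_ge0 => //; exact: expR_ge0.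
have E (S : {set 'I_n}) : \prod_(i < n) (if i \in S then p else q) * expR (l * (#|S|%:R - c)) =
    expR (- (l * c)) * \prod_(i < n) (if i \in S then p * expR l else q).
  rewrite mulrBr expRD expRM_natr mulrA mulrC; congr (_ * _).
  rewrite -prodr_const (big_mkcond (fun i => i \in S)) -big_split /=.
  by apply: eq_bigr => i _; case: ifP => _; rewrite ?mulr1.
under eq_bigr do rewrite E.
rewrite -mulr_sumr sum_prod_if.
set D := l ^+ 2 / (2 * (1 - l / 3)).
have c' : expR (- (l * c)) = expR (- (l * (p + t))) ^+ n.
  by rewrite -expRM_natl; congr expR; rewrite /c; ring.
rewrite c' -exprMn.
have key : expR (- (l * (p + t))) * (p * expR l + q) <= expR (- (l * t) + s * D).
  have -> : expR (- (l * (p + t))) * (p * expR l + q) =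
     expR (- (l * t)) * ((1 - p) * expR (- (l * p)) + p * expR (l * (1 - p))).
    have e1 : expR (- (l * (p + t))) = expR (- (l * t)) * expR (- (l * p)).
      by rewrite -expRD; congr expR; ring.
    have e2 : expR (l * (1 - p)) = expR (- (l * p)) * expR l.
      by rewrite -expRD; congr expR; ring.
    rewrite e1 e2 /q; ring.
  rewrite expRD; apply: ler_wpM2l; first exact: expR_ge0.
  apply: mgf_bound; apply/andP; split => //.
apply: (le_trans (lerXn2r n _ _ key)).
- by rewrite nnegrE mulr_ge0 // ?expR_ge0 // addr_ge0 // ?mulr_ge0 ?expR_ge0 // ltW.
- by rewrite nnegrE expR_ge0.
rewrite -expRM_natl ler_expR.
have TA := tail_alg _ _ s0 t0.
rewrite -/l -/D in TA.
rewrite TA /s le_eqVlt; apply/orP; left; apply/eqP.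
field; rewrite !gt_eqF //; nra.
Qed.
End SH.
Section SB.
Variable R : realType.

Lemma val_prop (a Q K e : R) : 0 <= a -> 0 <= Q -> 0 < K -> 0 < e < 1 ->
  let v := (1 - e)^-1 * (e * a + Num.sqrt Q + (2 / 3 + (2 * e)^-1) * K) in
  0 < v /\ Q + 2 * K * (a + v) + 2 * K * v / 3 <= v ^+ 2.
Proof.
move=> a0 Q0 K0 /andP[e0 e1] v.
set sq := Num.sqrt Q.
have sq0 : 0 <= sq by apply: sqrtr_ge0.
have sqE : sq ^+ 2 = Q by rewrite sqr_sqrtr.
set iv := (2 * e)^-1.
have iv0 : 0 < iv by rewrite /iv invr_gt0; lra.
have ivE : 2 * e * iv = 1 by rewrite /iv divff // gt_eqF //; lra.
have hv : (1 - e) * v = e * a + sq + (2 / 3 + iv) * K.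
  by rewrite /v mulrA divff ?mul1r // gt_eqF // subr_gt0.
clearbody v iv sq.
have v0 : 0 < v.
  have : 0 < (1 - e) * v by rewrite hv; nra.
  rewrite pmulr_rgt0 // subr_gt0 //.
split => //.
set r := e * (a + v) + K * iv.
have r0 : 0 <= r by rewrite /r; nra.
have vE : v = sq + 2 * K / 3 + r by rewrite /r; nra.
have rr : 2 * K * (a + v) <= r ^+ 2.
  have : 0 <= (e * (a + v) - K * iv) ^+ 2 by apply: sqr_ge0.
  have hh : K * (a + v) * (2 * e * iv) = K * (a + v) by rewrite ivE mulr1.
  rewrite /r; nra.
have vv : sq ^+ 2 + r ^+ 2 + 2 * K * v / 3 <= v ^+ 2.
  have h1 : sq <= v by nra.
  have h2 : r <= v by nra.
  have h3 : sq * sq <= v * sq by nra.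
  have h4 : r * r <= v * r by nra.
  have -> : v ^+ 2 = v * sq + v * (2 * K / 3) + v * r by rewrite expr2 {1}vE; ring.
  rewrite !expr2; lra.
rewrite -sqE; lra.
Qed.

Lemma inf_prop (a Q K : R) : 0 <= a -> 0 <= Q -> 0 < K ->
  let b := inf [set (1 - e)^-1 * (e * a + Num.sqrt Q + (2 / 3 + (2 * e)^-1) * K)
      | e in `]0, 1[%classic] in
  0 < b /\ Q + 2 * K * (a + b) + 2 * K * b / 3 <= b ^+ 2.
Proof.
move=> a0 Q0 K0 b.
set beta := 2 * K + 2 * K / 3.
set C := Q + 2 * K * a.
have C0 : 0 <= C by rewrite /C; nra.
have be0 : 0 < beta by rewrite /beta; lra.
set z := Num.sqrt (beta ^+ 2 + 4 * C).
have z0 : 0 <= z by apply: sqrtr_ge0.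
have zE : z ^+ 2 = beta ^+ 2 + 4 * C by rewrite sqr_sqrtr //; nra.
have zb : beta <= z.
  rewrite leNgt; apply/negP => h.
  have : z ^+ 2 < beta ^+ 2 by rewrite !expr2; nra.
  rewrite zE; lra.
set ts := (beta + z) / 2.
have HE x : x ^+ 2 - beta * x - C = (x - ts) * (x - (beta - z) / 2).
  rewrite /ts; apply/eqP; rewrite -subr_eq0; apply/eqP.
  have -> : x ^+ 2 - beta * x - C - (x - (beta + z) / 2) * (x - (beta - z) / 2)
     = (z ^+ 2 - beta ^+ 2 - 4 * C) / 4 by field.
  by rewrite zE; field.
have lb : lbound [set (1 - e)^-1 * (e * a + Num.sqrt Q + (2 / 3 + (2 * e)^-1) * K)
      | e in `]0, 1[%classic] ts.
  move=> v [e]; rewrite /= in_itv /= => he <-.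
  have [v0 vH] := val_prop _ _ _ _ a0 Q0 K0 he.
  set w := (1 - e)^-1 * _ in v0 vH *.
  rewrite leNgt; apply/negP => wt.
  have : w ^+ 2 - beta * w - C < 0.
    rewrite HE; nra.
  rewrite /beta /C; lra.
have tsb : ts <= b.
  apply: lb_le_inf => //.
  exists ((1 - 2^-1)^-1 * (2^-1 * a + Num.sqrt Q + (2 / 3 + (2 * 2^-1)^-1) * K)).
  by exists 2^-1 => //=; rewrite in_itv /=; apply/andP; split; lra.
have ts0 : 0 < ts by rewrite /ts; lra.
split; first exact: (lt_le_trans ts0 tsb).
have : 0 <= b ^+ 2 - beta * b - C.
  rewrite HE; apply: mulr_ge0; lra.
rewrite /beta /C; lra.
Qed.
End SB.

Definition cnt (R : realType) n (xs : 'I_n -> R) (B : R -> bool) : R :=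
  \sum_(i < n) (if B (xs i) then 1 else 0).
Arguments cnt {R n}.

Section Prob.
Context d (T : measurableType d) (R : realType) (P : probability T R) (n : nat)
  (X : 'I_n -> {RV P >-> R}).
Hypothesis indep : mutually_independent P (fun i => (X i : T -> R)).

Lemma cnt_card (b : R -> bool) w :
  cnt (fun i => X i w) b = #|(finset (fun i => b (X i w)))|%:R.
Proof.
rewrite /cnt -big_mkcond /= -sum1_card natr_sum.
by apply: congr_big => // i; rewrite inE.
Qed.

Definition ES (b : R -> bool) (S : {set 'I_n}) : set T :=
  \bigcap_(i in setT) (X i @^-1` (if i \in S then [set y | b y] else ~` [set y | b y])).

Lemma ESP b S w : ES b S w <-> (finset (fun i => b (X i w))) = S.
Proof.
split.
  move=> h; apply/setP => i; rewrite inE.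
  have := h i I; case: ifP => iS /=; first by move=> ->.
  by move=> /negP /negbTE ->.
move=> <- i _ /=; rewrite inE; case: ifP => //= hb.
by rewrite hb.
Qed.

Lemma prob_cnt (b : R -> bool) (mB : measurable [set y | b y]) (p : R)
  (hp : forall i, P (X i @^-1` [set y | b y]) = p%:E) (phi : R -> bool) :
  measurable [set w | phi (cnt (fun i => X i w) b)] /\
  P [set w | phi (cnt (fun i => X i w) b)] =
  (\sum_(S : {set 'I_n} | phi #|S|%:R) \prod_(i < n) (if i \in S then p else 1 - p))%:E.
Proof.
have mES S : measurable (ES b S).
  apply: fin_bigcap_measurable; first exact: finite_finset.
  move=> i _; apply: measurable_funPTI; case: ifP => _ //.
  exact: measurableC.
have E : [set w | phi (cnt (fun i => X i w) b)] =
    \bigcup_(S in [set S : {set 'I_n} | phi #|S|%:R]) ES b S.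
  apply/seteqP; split => w /=.
    move=> h; exists (finset (fun i => b (X i w))); last by apply/ESP.
    by rewrite /= -cnt_card.
  by move=> [S hS /ESP hw]; rewrite cnt_card hw.
rewrite E; split.
  apply: fin_bigcup_measurable; first exact: finite_finset.
  by move=> S _.
rewrite measure_fin_bigcup; last 3 first.
- exact: finite_finset.
- move=> S S' _ _ [w [/ESP h1 /ESP h2]]; by rewrite -h1 -h2.
- by move=> S _.
rewrite (fsbigE (seq.filter (fun S : {set 'I_n} => phi #|S|%:R) (index_enum {set 'I_n}))); last 3 first.
- exact/filter_uniq/index_enum_uniq.
- by move=> S /=; rewrite mem_filter => /andP[].
- by move=> S /= hS; rewrite mem_filter mem_index_enum andbT hS.
rewrite big_filter_cond -sumEFin.
apply: eq_big => S.
  by case h: (phi _) => //=; apply/mem_set.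
move=> _.
have hB : forall i, measurable ((fun i => if i \in S then [set y | b y] else ~` [set y | b y]) i).
  move=> i /=; case: ifP => _ //; exact: measurableC.
have := indep _ hB; rewrite /= => H.
rewrite /ES H.
rewrite -prodEFin; apply: eq_bigr => i _.
case: ifP => _ //.
rewrite -preimage_setC probability_setC ?hp //.
exact: measurable_funPTI.
Qed.
End Prob.

Section SQ.
Variable R : realType.

Lemma fin_min n (xs : 'I_n -> R) (P : {pred 'I_n}) i0 : P i0 ->
  exists2 j, P j & forall i, P i -> xs j <= xs i.
Proof. by move=> Pi0; case: (arg_minP xs Pi0) => j Pj H; exists j. Qed.

Lemma fin_max n (xs : 'I_n -> R) (P : {pred 'I_n}) i0 : P i0 ->
  exists2 j, P j & forall i, P i -> xs i <= xs j.
Proof. by move=> Pi0; case: (arg_maxP xs Pi0) => j Pj H; exists j. Qed.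



Lemma cnt_ge0 n xs B : 0 <= @cnt R n xs B.
Proof. by apply: sumr_ge0 => i _; case: ifP. Qed.

Lemma cnt_le n xs (B1 B2 : R -> bool) :
  (forall i, B1 (xs i) -> B2 (xs i)) -> @cnt R n xs B1 <= cnt xs B2.
Proof.
move=> h; apply: ler_sum => i _; case: ifP => [/h ->|] //; case: ifP => //.
Qed.

Lemma cnt_all n xs (B : R -> bool) : (forall i, B (xs i)) -> @cnt R n xs B = n%:R.
Proof.
move=> h; rewrite /cnt (eq_bigr (fun=> 1)); last by move=> i _; rewrite h.
by rewrite sumr_const card_ord.
Qed.

Lemma cnt_none n xs (B : R -> bool) : (forall i, ~~ B (xs i)) -> @cnt R n xs B = 0.
Proof.
by move=> h; rewrite /cnt big1 // => i _; rewrite (negbTE (h i)).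
Qed.

Lemma emp_cdfE n (xs : 'I_n -> R) x : emp_cdf xs x = n%:R^-1 * cnt xs (fun y => y <= x).
Proof. by []. Qed.

Lemma bnd n (xs : 'I_n -> R) i : `|xs i| <= \sum_(j < n) `|xs j|.
Proof.
rewrite (bigD1 i) //= lerDl; apply: sumr_ge0 => j _; exact: normr_ge0.
Qed.

Lemma Qplus_le n (xs : 'I_n -> R) g c : (0 < n)%N -> 0 < g < 1 ->
  (Qplus g (emp_cdf xs) <= c) <-> (g < emp_cdf xs c).
Proof.
move=> n0 /andP[g0 g1].
have nR : 0 < n%:R :> R by rewrite ltr0n.
set M := \sum_(j < n) `|xs j|.
have hM i : - M <= xs i <= M.
  by rewrite -ler_norml; apply: bnd.
set A := [set x | g < emp_cdf xs x].
have lbA : lbound A (- M - 1).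
  move=> x; rewrite /A /= emp_cdfE => h.
  rewrite leNgt; apply/negP => hx.
  rewrite cnt_none ?mulr0 in h; first by lra.
  move=> i; rewrite -ltNge; have := hM i; lra.
have hasA : has_lbound A by exists (- M - 1).
have MA : A M.
  rewrite /A /= emp_cdfE cnt_all ?mulVf ?gt_eqF //.
  by move=> i; have := hM i; lra.
split => [hQ | hc]; last first.
  exact: ge_inf hasA c hc.
rewrite ltNge; apply/negP => hc.
have [[i0 hi0] | none] := pselect (exists i, c < xs i); last first.
  move: hc; rewrite emp_cdfE cnt_all ?mulVf ?gt_eqF //; first by lra.
  move=> i; rewrite leNgt; apply/negP => hi; apply: none; by exists i.
have [j hj jmin] := @fin_min n xs (fun i => c < xs i) i0 hi0.
have : xs j <= inf A.
  apply: lb_le_inf; first by exists M.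
  move=> x Ax; rewrite leNgt; apply/negP => xj.
  move: Ax; rewrite /A /= => Ax.
  have : emp_cdf xs x <= emp_cdf xs c.
    rewrite !emp_cdfE ler_pM2l ?invr_gt0 //; apply: cnt_le => i hi.
    rewrite leNgt; apply/negP => ci.
    have := jmin i ci; lra.
  lra.
rewrite /Qplus -/A in hQ; simpl in hj; lra.
Qed.

Lemma Qminus_ge n (xs : 'I_n -> R) g c : (0 < n)%N -> 0 < g < 1 ->
  (c <= Qminus g (emp_cdf xs)) <-> (cnt xs (fun y => y < c) < n%:R * g).
Proof.
move=> n0 /andP[g0 g1].
have nR : 0 < n%:R :> R by rewrite ltr0n.
set M := \sum_(j < n) `|xs j|.
have hM i : - M <= xs i <= M.
  by rewrite -ler_norml; apply: bnd.
set A := [set x | g <= emp_cdf xs x].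
have lbA : lbound A (- M - 1).
  move=> x; rewrite /A /= emp_cdfE => h.
  rewrite leNgt; apply/negP => hx.
  rewrite cnt_none ?mulr0 in h; first by lra.
  move=> i; rewrite -ltNge; have := hM i; lra.
have hasA : has_lbound A by exists (- M - 1).
have MA : A M.
  rewrite /A /= emp_cdfE cnt_all ?mulVf ?gt_eqF ?(ltW g1) //.
  by move=> i; have := hM i; lra.
split => [hQ | hc].
  rewrite ltNge; apply/negP => hc.
  have [[i0 hi0] | none] := pselect (exists i, xs i < c); last first.
    move: hc; rewrite cnt_none; first by nra.
    by move=> i; apply/negP => hi; apply: none; exists i.
  have [j hj jmax] := @fin_max n xs (fun i => xs i < c) i0 hi0.
  simpl in hj.
  have Aj : A (xs j).
    rewrite /A /= emp_cdfE.
    have : cnt xs (fun y => y < c) <= cnt xs (fun y => y <= xs j).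
      by apply: cnt_le => i hi; apply: jmax.
    move=> h; rewrite -(ler_pM2l nR) mulrA mulfV ?gt_eqF // mul1r; lra.
  have := ge_inf hasA Aj; rewrite /Qminus -/A in hQ; lra.
apply: lb_le_inf; first by exists M.
move=> x Ax; rewrite leNgt; apply/negP => xc.
move: Ax; rewrite /A /= emp_cdfE => Ax.
have : cnt xs (fun y => y <= x) <= cnt xs (fun y => y < c).
  by apply: cnt_le => i hi; lra.
move=> h; move: Ax; rewrite -(ler_pM2l nR) mulrA mulfV ?gt_eqF // mul1r; lra.
Qed.
End SQ.

Section U.
Variable R : realType.
Local Notation mu := (@lebesgue_measure R).

Lemma unif_mu (U : set R) : measurable U ->
  uniform_prob (@ltr01 R) U = mu (U `&` `[0, 1]).
Proof.
move=> mU.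
rewrite /uniform_prob integral_uniform_pdf.
rewrite (eq_integral (fun=> 1%:E)); last first.
  move=> x; rewrite inE /= => -[_]; rewrite in_itv /= /uniform_pdf => ->.
  by rewrite subr0 invr1.
rewrite integral_cst /= ?mul1e //.
by apply: measurableI => //; exact: measurable_itv.
Qed.

Lemma unif_gt (c : R) : 0 < c ->
  uniform_prob (@ltr01 R) [set y | c < y] = (if c < 1 then 1 - c else 0)%:E.
Proof.
move=> c0.
have mU : measurable [set y : R | c < y].
  have -> : [set y : R | c < y] = `]c, +oo[%classic.
    by apply/seteqP; split => y /=; rewrite in_itv /= andbT.
  exact: measurable_itv.
rewrite unif_mu //.
case: ifP => c1.
  have -> : [set y | c < y] `&` `[0, 1] = `]c, 1]%classic.
    apply/seteqP; split => y /=; rewrite !in_itv /=.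
      by move=> [-> /andP[_ ->]].
    by move=> /andP[cy y1]; split => //; apply/andP; split => //; lra.
  by rewrite lebesgue_measure_itv /= lte_fin c1 EFinD.
have -> : [set y | c < y] `&` `[0, 1] = set0.
  apply/seteqP; split => y //=; rewrite !in_itv /= => -[cy /andP[_ y1]].
  move/negbT: c1; rewrite -leNgt => c1; lra.
by rewrite measure0.
Qed.

Lemma unif_lt (c : R) : c < 1 ->
  uniform_prob (@ltr01 R) [set y | y < c] = (if 0 < c then c else 0)%:E.
Proof.
move=> c1.
have mU : measurable [set y : R | y < c].
  have -> : [set y : R | y < c] = `]-oo, c[%classic.
    by apply/seteqP; split => y /=; rewrite in_itv /=.
  exact: measurable_itv.
rewrite unif_mu //.
case: ifP => c0.
  have -> : [set y | y < c] `&` `[0, 1] = `[0, c[%classic.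
    apply/seteqP; split => y /=; rewrite !in_itv /=.
      by move=> [-> /andP[-> _]].
    by move=> /andP[y0 yc]; split => //; apply/andP; split => //; lra.
  by rewrite lebesgue_measure_itv /= lte_fin c0 -EFinD subr0.
have -> : [set y | y < c] `&` `[0, 1] = set0.
  apply/seteqP; split => y //=; rewrite !in_itv /= => -[cy /andP[y0 _]].
  move/negbT: c0; rewrite -leNgt => c0; lra.
by rewrite measure0.
Qed.
End U.


Section Fin.
Variable R : realType.

Lemma cnt_split n (xs : 'I_n -> R) c :
  cnt xs (fun y => y <= c) + cnt xs (fun y => c < y) = n%:R.
Proof.
rewrite /cnt -big_split /= (eq_bigr (fun=> 1)); first by rewrite sumr_const card_ord.
by move=> i _; case: (leP (xs i) c) => _; rewrite ?addr0 ?add0r.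
Qed.

Lemma compl_sum n (p th : R) :
  \sum_(S : {set 'I_n} | #|S|%:R < th) \prod_(i < n) (if i \in S then p else 1 - p) =
  1 - \sum_(S : {set 'I_n} | th <= #|S|%:R) \prod_(i < n) (if i \in S then p else 1 - p).
Proof.
have := @sum_prod_if R n p (1 - p); rewrite (_ : p + (1 - p) = 1) ?expr1n; last by ring.
rewrite (bigID (fun S : {set 'I_n} => #|S|%:R < th)) /= => H.
have -> : \sum_(S : {set 'I_n} | th <= #|S|%:R) \prod_(i < n) (if i \in S then p else 1 - p)
  = \sum_(S : {set 'I_n} | ~~ (#|S|%:R < th)) \prod_(i < n) (if i \in S then p else 1 - p).
  by apply: eq_bigl => S; rewrite -leNgt.
by apply/eqP; rewrite eq_sym subr_eq H.
Qed.

Lemma var_bound (p g' : R) : 0 < g' < 1 -> p * (1 - p) <= g' * (1 - g') + `|p - g'|.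
Proof.
move=> /andP[g0 g1]; case: (boolP (g' <= p)) => h.
  by rewrite ger0_norm ?subr_ge0 //; nra.
move: h; rewrite -ltNge => h.
by rewrite ltr0_norm ?subr_lt0 //; nra.
Qed.

Lemma side_bound n (p t g' a dl : R) : (0 < n)%N -> 0 < p < 1 -> 0 < t -> 0 < dl < 1 ->
  0 < g' < 1 -> 0 <= a ->
  p * (1 - p) <= g' * (1 - g') + a + t ->
  2 * g' * (1 - g') * ln dl^-1 / n%:R + 2 * (ln dl^-1 / n%:R) * (a + t)
    + 2 * (ln dl^-1 / n%:R) * t / 3 <= t ^+ 2 ->
  \sum_(S : {set 'I_n} | n%:R * (p + t) <= #|S|%:R)
     \prod_(i < n) (if i \in S then p else 1 - p) <= dl.
Proof.
move=> n0 hp t0 /andP[d0 d1] hg' a0 hvar hyp.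
apply: (le_trans (@tail_upper R n _ _ hp t0)).
have nR : 0 < n%:R :> R by rewrite ltr0n.
have L0 : 0 < ln dl^-1 by apply: ln_gt0; rewrite invf_gt1.
have dE : dl = expR (- ln dl^-1).
  by rewrite lnV ?posrE // opprK lnK // posrE.
rewrite [X in _ <= X]dE ler_expR lerN2.
move: hp => /andP[p0 p1].
have den0 : 0 < 2 * p * (1 - p) + 2 * t / 3 by nra.
rewrite ler_pdivlMr //.
set L := ln dl^-1 in L0 hyp dE *.
set K := L / n%:R in hyp.
have K0 : 0 < K by rewrite /K divr_gt0.
have LK : L = n%:R * K by rewrite /K mulrC divfK // gt_eqF.
have E2 : 2 * g' * (1 - g') * L / n%:R = 2 * g' * (1 - g') * K by rewrite /K mulrA.
rewrite E2 in hyp.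
have h1 : K * (2 * p * (1 - p) + 2 * t / 3) <= t ^+ 2.
  have : K * (p * (1 - p)) <= K * (g' * (1 - g') + a + t) by apply: ler_wpM2l => //; exact: ltW.
  lra.
rewrite LK; have h2 := ler_wpM2l (ltW nR) h1.
apply: le_trans h2; rewrite le_eqVlt; apply/orP; left; apply/eqP; ring.
Qed.
End Fin.

Theorem lemma3 (d : measure_display) (T : measurableType d) (R : realType)
    (P : probability T R) (n : nat) (X : 'I_n -> {RV P >-> R})
    (n_gt0 : (0 < n)%N)
    (indep : mutually_independent P (fun i => (X i : T -> R)))
    (unif : forall i (A : set R), measurable A ->
       distribution P (X i) A = uniform_prob (@ltr01 R) A)
    (g g' delta : R)
    (hg : 0 < g < 1) (hg' : 0 < g' < 1) (hdelta : 0 < delta < 1) :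
  let bound := inf [set (1 - e)^-1 *
        (e * `|g - g'|
         + Num.sqrt (2 * g' * (1 - g') * ln delta^-1 / n%:R)
         + (2 / 3 + (2 * e)^-1) * (ln delta^-1 / n%:R))
      | e in `]0, 1[%classic] in
  ((1 - delta)%:E <=
     P [set w | (Qplus g (emp_cdf (fun i => X i w)) - g <= bound)%R])%E /\
  ((1 - delta)%:E <=
     P [set w | (g - Qminus g (emp_cdf (fun i => X i w)) <= bound)%R])%E.
Proof.
move=> bound.
have nR : 0 < n%:R :> R by rewrite ltr0n.
move: (hdelta) => /andP[d0 d1].
move: (hg) => /andP[g0 g1].
move: (hg') => /andP[g'0 g'1].
have L0 : 0 < ln delta^-1 by apply: ln_gt0; rewrite invf_gt1.
have a0 : 0 <= `|g - g'| by apply: normr_ge0.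
have Q0 : 0 <= 2 * g' * (1 - g') * ln delta^-1 / n%:R.
  by apply: divr_ge0; [apply: mulr_ge0; [nra | lra] | lra].
have K0 : 0 < ln delta^-1 / n%:R by apply: divr_gt0.
have := @inf_prop R _ _ _ a0 Q0 K0; rewrite /= -/bound => -[b0 hb].
clearbody bound.
have hvar (c : R) : c * (1 - c) <= g' * (1 - g') + `|g - g'| + bound ->
   True by [].
split.
-
  set c := g + bound.
  have mB : measurable [set y : R | c < y].
    have -> : [set y : R | c < y] = `]c, +oo[%classic.
      by apply/seteqP; split => y /=; rewrite in_itv /= andbT.
    exact: measurable_itv.
  have hp i : P (X i @^-1` [set y | c < y]) = (if c < 1 then 1 - c else 0)%:E.
    by rewrite -[LHS]/(distribution P (X i) _) unif // unif_gt //; rewrite /c; lra.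
  have E : [set w | Qplus g (emp_cdf (fun i => X i w)) - g <= bound] =
     [set w | (fun x => x < n%:R * (1 - g)) (cnt (fun i => X i w) (fun y => c < y))].
    apply/seteqP; split => w /=.
      move=> h.
      have : Qplus g (emp_cdf (fun i => X i w)) <= c by rewrite /c; lra.
      move/(@Qplus_le R n _ _ _ n_gt0 hg); rewrite emp_cdfE ltr_pdivlMl //.
      have := @cnt_split R n (fun i => X i w) c; lra.
    move=> h.
    suff : Qplus g (emp_cdf (fun i => X i w)) <= c by rewrite /c; lra.
    apply/(@Qplus_le R n _ _ _ n_gt0 hg); rewrite emp_cdfE ltr_pdivlMl //.
    have := @cnt_split R n (fun i => X i w) c; lra.
  rewrite E.
  have [_ ->] := @prob_cnt _ _ _ P n X indep _ mB _ hp (fun x => x < n%:R * (1 - g)).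
  rewrite lee_fin compl_sum.
  suff : \sum_(S : {set 'I_n} | n%:R * (1 - g) <= #|S|%:R)
     \prod_(i < n) (if i \in S then (if c < 1 then 1 - c else 0)
                   else 1 - (if c < 1 then 1 - c else 0)) <= delta by lra.
  case: ifP => c1.
    have -> : n%:R * (1 - g) = n%:R * ((1 - c) + bound) by rewrite /c; congr (_ * _); ring.
    apply: (@side_bound R n _ _ g' (`|g - g'|) delta) => //.
    + have c0 : 0 < c by rewrite /c; lra.
      by apply/andP; split; lra.
    + have := @var_bound R c _ hg'.
      have : `|c - g'| <= `|g - g'| + bound.
        rewrite /c (_ : g + bound - g' = (g - g') + bound); last by ring.
        by apply: (le_trans (ler_normD _ _)); rewrite (ger0_norm (ltW b0)).
      have -> : (1 - c) * (1 - (1 - c)) = c * (1 - c) by ring.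
      lra.
  under eq_bigr do under eq_bigr do rewrite subr0.
  rewrite sum_wt0; first exact: ltW d0.
  move=> k hk; rewrite lt0n; apply/negP => /eqP k0.
  by move: hk; rewrite k0 /=; nra.
-
  set c := g - bound.
  have mB : measurable [set y : R | y < c].
    have -> : [set y : R | y < c] = `]-oo, c[%classic.
      by apply/seteqP; split => y /=; rewrite in_itv /=.
    exact: measurable_itv.
  have hp i : P (X i @^-1` [set y | y < c]) = (if 0 < c then c else 0)%:E.
    by rewrite -[LHS]/(distribution P (X i) _) unif // unif_lt //; rewrite /c; lra.
  have E : [set w | g - Qminus g (emp_cdf (fun i => X i w)) <= bound] =
     [set w | (fun x => x < n%:R * g) (cnt (fun i => X i w) (fun y => y < c))].
    apply/seteqP; split => w /=.
      move=> h.
      have : c <= Qminus g (emp_cdf (fun i => X i w)) by rewrite /c; lra.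
      by move/(@Qminus_ge R n _ _ _ n_gt0 hg).
    move=> h.
    suff : c <= Qminus g (emp_cdf (fun i => X i w)) by rewrite /c; lra.
    exact/(@Qminus_ge R n _ _ _ n_gt0 hg).
  rewrite E.
  have [_ ->] := @prob_cnt _ _ _ P n X indep _ mB _ hp (fun x => x < n%:R * g).
  rewrite lee_fin compl_sum.
  suff : \sum_(S : {set 'I_n} | n%:R * g <= #|S|%:R)
     \prod_(i < n) (if i \in S then (if 0 < c then c else 0)
                   else 1 - (if 0 < c then c else 0)) <= delta by lra.
  case: ifP => c0.
    have -> : n%:R * g = n%:R * (c + bound) by rewrite /c; congr (_ * _); ring.
    apply: (@side_bound R n _ _ g' (`|g - g'|) delta) => //.
    + have c1 : c < 1 by rewrite /c; lra.
      by apply/andP; split; lra.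
    + have := @var_bound R c _ hg'.
      have : `|c - g'| <= `|g - g'| + bound.
        rewrite /c (_ : g - bound - g' = (g - g') + - bound); last by ring.
        by apply: (le_trans (ler_normD _ _)); rewrite normrN (ger0_norm (ltW b0)).
      lra.
  under eq_bigr do under eq_bigr do rewrite subr0.
  rewrite sum_wt0; first exact: ltW d0.
  move=> k hk; rewrite lt0n; apply/negP => /eqP k0.
  by move: hk; rewrite k0 /=; nra.
Qed.
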